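(* Suppose $0<\delta<2$ and $U,\tilde U\in C^1(-1,-1+\delta]\cap C^0[-1,-1+\delta]$ satisfy $$(1-x^2)U'+2xU+\tfrac12U^2\ge(1-x^2)\tilde U'+2x\tilde U+\tfrac12\tilde U^2,\quad -1<x<-1+\delta.$$ Suppose also that one of the following holds: (i) $U(-1)\ge\tilde U(-1)>2$; (ii) $U(-1)=\tilde U(-1)=2$ and $\limsup_{x\to-1^+}\int_{-1+\delta}^x\frac{-2+U(s)}{1-s^2}\,ds<+\infty$. Then either $U>\tilde U$ in $(-1,-1+\delta)$, or there exists $\delta'\in(0,\delta)$ such that $U\equiv\tilde U$ in $(-1,-1+\delta')$. *)

(* Defs.v *)
From Stdlib Require Import Reals.
From Coquelicot Require Import Coquelicot.
Open Scope R_scope.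

Definition cont_on (I : R -> Prop) (f : R -> R) : Prop :=
  forall x, I x -> filterlim f (within I (locally x)) (locally (f x)).

Definition C1_on (I : R -> Prop) (f : R -> R) : Prop :=
  exists g : R -> R, cont_on I g /\
    forall x, I x ->
      filterlim (fun y => (f y - f x) / (y - x))
        (within (fun y => I y /\ y <> x) (locally x)) (locally (g x)).

(* Main.v *)
Require Import Defs.
From Stdlib Require Import Reals Lra Classical.
From Coquelicot Require Import Coquelicot.
Open Scope R_scope.
Lemma cont_eps (I : R -> Prop) f x eps : cont_on I f -> I x -> 0 < eps ->
  exists d, 0 < d /\ forall y, I y -> Rabs (y - x) < d -> Rabs (f y - f x) < eps.
Proof.
  intros H Hx He.
  assert (Hb := H x Hx (ball (f x) (mkposreal eps He)) (locally_ball _ _)).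
  destruct Hb as [d Hd].
  exists d; split; [apply cond_pos|].
  intros y Iy Hy. exact (Hd y Hy Iy).
Qed.

Lemma cont_min (U : R -> R) m z : cont_on (fun x => -1 <= x <= m) U -> -1 < z <= m ->
  continuity_pt (fun s => U (Rmin s m)) z.
Proof.
  intros H Hz eps He.
  destruct (cont_eps _ U z eps H ltac:(lra) He) as [e [He' Hd]].
  exists (Rmin e (z + 1)); split; [apply Rmin_pos; lra|].
  intros y [_ Hy]. unfold R_dist in *. simpl.
  assert (Hy1 := Rmin_l e (z+1)). assert (Hy2 := Rmin_r e (z+1)).
  apply Rabs_def2 in Hy. rewrite (Rmin_left z m) by lra.
  apply Hd.
  - unfold Rmin; destruct Rle_dec; lra.
  - apply Rabs_def1; unfold Rmin; destruct Rle_dec; lra.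
Qed.

Lemma intF (U : R -> R) m t : m < 1 -> cont_on (fun x => -1 <= x <= m) U -> -1 < t <= m ->
  ex_RInt (fun s => (-2 + U s) / (1 - s ^ 2)) t m.
Proof.
  intros Hm H Ht.
  destruct (Req_dec t m) as [->|Hne]; [apply ex_RInt_point|].
  apply ex_RInt_ext with (f := fun s => (-2 + U (Rmin s m)) / (1 - s ^ 2)).
  - intros x Hx. rewrite Rmin_left in Hx by lra. rewrite Rmax_right in Hx by lra.
    rewrite Rmin_left by lra. reflexivity.
  - apply (ex_RInt_continuous (V:=R_CompleteNormedModule)). intros z Hz.
    rewrite Rmin_left in Hz by lra. rewrite Rmax_right in Hz by lra.
    apply continuity_pt_filterlim.
    apply (continuity_pt_div (fun s => -2 + U (Rmin s m)) (fun s => 1 - s ^ 2)).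
    + apply (continuity_pt_plus (fun _ => -2) (fun s => U (Rmin s m))).
      apply continuity_pt_const. intros a b; reflexivity.
      apply cont_min; auto; lra.
    + apply (continuity_pt_minus (fun _ => 1) (fun s => s ^ 2)).
      apply continuity_pt_const. intros a b; reflexivity.
      apply derivable_continuous_pt. apply derivable_pt_pow.
    + nra.
Qed.
Lemma deriv_int (I : R -> Prop) f x d : C1_on I f -> 0 < d ->
  (forall y, Rabs (y - x) < d -> I y) -> ex_derive f x.
Proof.
  intros [g [_ Hg]] Hd Hin.
  exists (g x). apply is_derive_Reals.
  assert (Ix : I x) by (apply Hin; rewrite Rminus_diag, Rabs_R0; lra).
  intros eps He.
  destruct (Hg x Ix (ball (g x) (mkposreal eps He)) (locally_ball _ _)) as [e He'].
  assert (Hp : 0 < Rmin e d) by (apply Rmin_pos; [apply cond_pos|lra]).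
  exists (mkposreal _ Hp). intros h hne hlt. simpl in hlt.
  assert (A : ball x e (x + h)).
  { change (Rabs (x + h - x) < e). replace (x + h - x) with h by ring.
    eapply Rlt_le_trans; [exact hlt| apply Rmin_l]. }
  assert (B : I (x + h) /\ x + h <> x).
  { split; [apply Hin; replace (x + h - x) with h by ring;
      eapply Rlt_le_trans; [exact hlt| apply Rmin_r] | lra]. }
  specialize (He' _ A B). change (Rabs ((f (x+h) - f x) / (x + h - x) - g x) < eps) in He'.
  replace (x + h - x) with h in He' by ring. exact He'.
Qed.

Lemma cont_int (I : R -> Prop) f x d : cont_on I f -> 0 < d ->
  (forall y, Rabs (y - x) < d -> I y) -> continuity_pt f x.
Proof.
  intros H Hd Hin eps He.
  assert (Ix : I x) by (apply Hin; rewrite Rminus_diag, Rabs_R0; lra).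
  destruct (cont_eps I f x eps H Ix He) as [e [He' Hd']].
  exists (Rmin e d); split; [apply Rmin_pos; lra|].
  intros y [_ Hy]. unfold R_dist in *. apply Hd'.
  - apply Hin. eapply Rlt_le_trans; [exact Hy| apply Rmin_r].
  - eapply Rlt_le_trans; [exact Hy| apply Rmin_l].
Qed.

Lemma mono (f df : R -> R) a b : (forall x, a < x < b -> is_derive f x (df x)) ->
  (forall x, a < x < b -> 0 <= df x) -> forall y z, a < y -> y <= z -> z < b -> f y <= f z.
Proof.
  intros Hd Hp y z Hy Hyz Hz.
  destruct (Req_dec y z) as [->|Hne]; [lra|].
  destruct (MVT_gen f y z df) as [c [Hc Heq]].
  - intros x Hx. rewrite Rmin_left in Hx by lra. rewrite Rmax_right in Hx by lra.
    apply Hd; lra.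
  - intros x Hx. rewrite Rmin_left in Hx by lra. rewrite Rmax_right in Hx by lra.
    apply continuity_pt_filterlim. apply (ex_derive_continuous (V:=R_NormedModule) f). exists (df x). apply Hd; lra.
  - rewrite Rmin_left in Hc by lra. rewrite Rmax_right in Hc by lra.
    assert (0 <= df c) by (apply Hp; lra). nra.
Qed.

Theorem lemma2p4 (delta : R) (U Ut : R -> R) :
  0 < delta < 2 ->
  C1_on (fun x => -1 < x <= -1 + delta) U ->
  C1_on (fun x => -1 < x <= -1 + delta) Ut ->
  cont_on (fun x => -1 <= x <= -1 + delta) U ->
  cont_on (fun x => -1 <= x <= -1 + delta) Ut ->
  (forall x, -1 < x < -1 + delta ->
     (1 - x ^ 2) * Derive U x + 2 * x * U x + / 2 * (U x) ^ 2
     >= (1 - x ^ 2) * Derive Ut x + 2 * x * Ut x + / 2 * (Ut x) ^ 2) ->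
  ((U (-1) >= Ut (-1) /\ Ut (-1) > 2) \/
   (U (-1) = 2 /\ Ut (-1) = 2 /\
    (exists M eta : R, 0 < eta /\
       forall x, -1 < x < -1 + eta ->
         RInt (fun s => (-2 + U s) / (1 - s ^ 2)) (-1 + delta) x <= M))) ->
  (forall x, -1 < x < -1 + delta -> U x > Ut x) \/
  (exists delta' : R, 0 < delta' < delta /\
     forall x, -1 < x < -1 + delta' -> U x = Ut x).
Proof.
  intros Hd HU HUt cU cUt Hineq Hcase.
  set (m := -1 + delta) in *.
  assert (Hm : m < 1) by (unfold m; lra).
  assert (Hint : forall x, -1 < x < m -> 0 < Rmin (x+1) (m-x) /\
     forall y, Rabs (y - x) < Rmin (x+1) (m-x) -> -1 < y <= m /\ -1 <= y <= m).
  { intros x Hx. split; [apply Rmin_pos; lra|]. intros y Hy.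
    assert (H1 := Rmin_l (x+1) (m-x)). assert (H2 := Rmin_r (x+1) (m-x)).
    apply Rabs_def2 in Hy. lra. }
  assert (dU : forall x, -1 < x < m -> ex_derive U x).
  { intros x Hx. destruct (Hint x Hx) as [A B].
    apply (deriv_int _ U x _ HU A). intros y Hy; apply B, Hy. }
  assert (dUt : forall x, -1 < x < m -> ex_derive Ut x).
  { intros x Hx. destruct (Hint x Hx) as [A B].
    apply (deriv_int _ Ut x _ HUt A). intros y Hy; apply B, Hy. }
  assert (cUx : forall x, -1 < x < m -> continuity_pt U x).
  { intros x Hx. destruct (Hint x Hx) as [A B].
    apply (cont_int _ U x _ cU A). intros y Hy; apply B, Hy. }
  set (F := fun s => (-2 + U s) / (1 - s ^ 2)) in *.
  set (G := fun x => RInt F m x).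
  assert (dG : forall x, -1 < x < m -> is_derive G x (F x)).
  { intros x Hx. destruct (Hint x Hx) as [A B].
    apply (is_derive_RInt (V:=R_CompleteNormedModule) F G m x).
    - exists (mkposreal _ A). intros b Hb. apply (B b) in Hb.
      unfold G. apply (RInt_correct (V:=R_CompleteNormedModule)).
      apply ex_RInt_swap. apply intF; auto; lra.
    - apply continuity_pt_filterlim. unfold F.
      apply (continuity_pt_div (fun s => -2 + U s) (fun s => 1 - s ^ 2)).
      + apply (continuity_pt_plus (fun _ => -2) U).
        apply continuity_pt_const. intros a b; reflexivity. auto.
      + apply (continuity_pt_minus (fun _ => 1) (fun s => s ^ 2)).
        apply continuity_pt_const. intros a b; reflexivity.
        apply derivable_continuous_pt. apply derivable_pt_pow.
      + nra. }
  set (E := fun x => exp (G x) / (1 - x) ^ 2).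
  set (h := fun x => (U x - Ut x) * E x).
  assert (dh : forall x, -1 < x < m -> is_derive h x
     (E x / (1 - x ^ 2) * ((1 - x ^ 2) * (Derive U x - Derive Ut x) + (U x + 2 * x) * (U x - Ut x)))).
  { intros x Hx. unfold h, E. auto_derive.
    - split; [apply dU; auto|]. split; [apply dUt; auto|].
      split; [exists (F x); apply dG; auto|]. split; [nra|exact I].
    - change (Derive (fun x0 => U x0) x) with (Derive U x).
      change (Derive (fun x0 => Ut x0) x) with (Derive Ut x).
      change (Derive (fun x0 => G x0) x) with (Derive G x).
      rewrite (is_derive_unique G x (F x) (dG x Hx)). unfold F.
      field. split; nra. }
  assert (Epos : forall x, x < 1 -> 0 < E x).
  { intros x Hx. unfold E. apply Rdiv_lt_0_compat. apply exp_pos. nra. }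
  assert (hmono : forall y z, -1 < y -> y <= z -> z < m -> h y <= h z).
  { apply (mono h _ (-1) m dh). intros x Hx.
    assert (HE := Epos x ltac:(lra)).
    assert (Hq := Hineq x Hx).
    apply Rmult_le_pos. apply Rdiv_le_0_compat; nra.
    assert (0 <= (U x - Ut x)^2) by apply pow2_ge_0. unfold m in *. nra. }
  assert (Hw1 : U (-1) >= Ut (-1)) by (destruct Hcase as [[? ?]|[? [? ?]]]; lra).
  assert (HK : exists c K, -1 < c < m /\ forall x, -1 < x < c -> G x <= K).
  { destruct Hcase as [[H1 H2] | [H1 [H2 [M [eta [Heta HM]]]]]].
    - destruct (cont_eps _ U (-1) (U (-1) - 2) cU ltac:(unfold m; lra) ltac:(lra)) as [d [Hd0 Hdd]].
      assert (R1 := Rmin_l d (delta/2)). assert (R2 := Rmin_r d (delta/2)).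
      assert (R3 : 0 < Rmin d (delta/2)) by (apply Rmin_pos; lra).
      set (c2 := -1 + Rmin d (delta/2)).
      exists ((-1 + c2)/2), (G ((-1+c2)/2)). split; [unfold c2, m; lra|].
      intros x Hx. apply (mono G F (-1) c2).
      + intros y Hy. apply dG. unfold c2, m in *; lra.
      + intros y Hy. unfold F. apply Rdiv_le_0_compat; [|unfold c2, m in *; nra].
        assert (Rabs (U y - U (-1)) < U (-1) - 2).
        { apply Hdd. unfold c2, m in *; lra. apply Rabs_def1; unfold c2 in *; lra. }
        apply Rabs_def2 in H. lra.
      + lra.
      + unfold c2 in *; lra.
      + unfold c2 in *; lra.
    - exists (-1 + Rmin eta (delta/2)), M.
      assert (R1 := Rmin_l eta (delta/2)). assert (R2 := Rmin_r eta (delta/2)).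
      assert (R3 : 0 < Rmin eta (delta/2)) by (apply Rmin_pos; lra).
      split; [unfold m; lra|].
      intros x Hx. apply HM. lra. }
  destruct HK as [c [K [Hc HK]]].
  destruct (classic (forall x, -1 < x < m -> U x > Ut x)) as [Hall|Hnot]; [left; exact Hall|right].
  apply not_all_ex_not in Hnot. destruct Hnot as [x0 Hx0].
  apply imply_to_and in Hx0. destruct Hx0 as [Hx0 Hw0]. apply Rnot_gt_le in Hw0.
  assert (Hneg : forall x, -1 < x <= x0 -> U x - Ut x <= 0).
  { intros x Hx. assert (h x <= h x0) by (apply hmono; lra).
    assert (HE := Epos x ltac:(lra)). assert (HE0 := Epos x0 ltac:(lra)).
    unfold h in *. nra. }
  exists (Rmin x0 c + 1).
  assert (R1 := Rmin_l x0 c). assert (R2 := Rmin_r x0 c).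
  assert (R3 : -1 < Rmin x0 c) by (apply Rmin_glb_lt; lra).
  split; [unfold m in *; lra|].
  intros x Hx.
  apply Rle_antisym; [assert (U x - Ut x <= 0) by (apply Hneg; lra); lra|].
  apply Rnot_lt_le. intro Hlt.
  assert (HEx := Epos x ltac:(lra)).
  assert (Hhx : h x < 0) by (unfold h; nra).
  set (eps := - h x / exp K).
  assert (Heps : 0 < eps) by (unfold eps; apply Rdiv_lt_0_compat; [lra|apply exp_pos]).
  destruct (cont_eps _ U (-1) (eps/2) cU ltac:(unfold m; lra) ltac:(lra)) as [d1 [Hd1 Hdd1]].
  destruct (cont_eps _ Ut (-1) (eps/2) cUt ltac:(unfold m; lra) ltac:(lra)) as [d2 [Hd2 Hdd2]].
  set (r := Rmin (Rmin d1 d2) (Rmin (x+1) 1)).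
  assert (Q1 := Rmin_l (Rmin d1 d2) (Rmin (x+1) 1)). assert (Q2 := Rmin_r (Rmin d1 d2) (Rmin (x+1) 1)).
  assert (Q3 := Rmin_l d1 d2). assert (Q4 := Rmin_r d1 d2).
  assert (Q5 := Rmin_l (x+1) 1). assert (Q6 := Rmin_r (x+1) 1).
  assert (Q7 : 0 < r) by (unfold r; repeat apply Rmin_pos; lra).
  fold r in Q1, Q2.
  set (y := -1 + r/2).
  assert (A1 : Rabs (U y - U (-1)) < eps/2).
  { apply Hdd1. unfold y, m in *; lra. apply Rabs_def1; unfold y; lra. }
  assert (A2 : Rabs (Ut y - Ut (-1)) < eps/2).
  { apply Hdd2. unfold y, m in *; lra. apply Rabs_def1; unfold y; lra. }
  apply Rabs_def2 in A1. apply Rabs_def2 in A2.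
  assert (Hhy : h y <= h x) by (apply hmono; unfold y in *; lra).
  assert (Hwy : U y - Ut y <= 0) by (apply Hneg; unfold y in *; lra).
  assert (HGy : G y <= K) by (apply HK; unfold y in *; lra).
  assert (HEy : E y <= exp K).
  { unfold E. apply (Rle_trans _ (exp (G y))).
    - assert (1 <= (1 - y)^2) by (unfold y in *; nra).
      assert (0 < exp (G y)) by apply exp_pos.
      apply (Rmult_le_reg_r ((1-y)^2)); [lra|].
      unfold Rdiv. rewrite Rmult_assoc, Rinv_l by lra. nra.
    - destruct HGy as [HGy| ->]; [left; apply exp_increasing; exact HGy| lra]. }
  assert (HEy0 := Epos y ltac:(unfold y in *; lra)).
  assert (Hfin : - h x <= (Ut y - U y) * exp K).
  { unfold h in Hhy |- *. nra. }
  assert (HeK : eps * exp K = - h x).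
  { unfold eps. field. apply Rgt_not_eq, exp_pos. }
  assert (0 < exp K) by apply exp_pos.
  assert (Ut y - U y < eps) by lra.
  nra.

Qed.
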